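(* Let $L$ be a finite lattice and $C$ a nonempty convex subset of $L$. Then every maximal chain of $L$ that does not intersect $C$ contains an element that is neither below all maximal elements of $C$ nor above all minimal elements of $C$.
   Context: A subset $C$ of $L$ is convex if $x,y\in C$ implies $[x,y]\subseteq C$. A maximal chain is a totally ordered subset to which no element can be added while remaining a chain. *)

(* Defs.v *)
From HB Require Import structures.
From mathcomp Require Import all_boot all_order.
Set Implicit Arguments. Unset Strict Implicit. Unset Printing Implicit Defensive.
Import Order.TTheory.
Local Open Scope order_scope.

Definition convex {d} {L : finLatticeType d} (C : {set L}) : Prop :=
  forall x y z : L, x \in C -> y \in C -> x <= z -> z <= y -> z \in C.

Definition is_chain {d} {L : finLatticeType d} (M : {set L}) : Prop :=
  forall x y : L, x \in M -> y \in M -> (x <= y) || (y <= x).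

Definition maximal_chain {d} {L : finLatticeType d} (M : {set L}) : Prop :=
  is_chain M /\ forall z : L, z \notin M -> ~ is_chain (z |: M).

Definition maximal_elt {d} {L : finLatticeType d} (C : {set L}) (m : L) : Prop :=
  m \in C /\ forall y : L, y \in C -> ~ (m < y).

Definition minimal_elt {d} {L : finLatticeType d} (C : {set L}) (m : L) : Prop :=
  m \in C /\ forall y : L, y \in C -> ~ (y < m).

(* Main.v *)
Require Import Defs.
From HB Require Import structures.
From mathcomp Require Import all_boot all_order.
From Stdlib Require Import Classical.
Import Order.TTheory.
Set Implicit Arguments. Unset Strict Implicit.
Local Open Scope order_scope.

Lemma ex_min (d : Order.disp_t) (L : finLatticeType d) (C : {set L}) c :
  c \in C -> exists m, minimal_elt C m /\ m <= c.
Proof.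
move=> cC.
suff H : forall n c, c \in C -> (#|[set y in C | (y < c)%O]| <= n)%N ->
  exists m, minimal_elt C m /\ m <= c by exact: H _ c cC (leqnn _).
move=> n; elim: n => [|n IH] {cC}c cC Hn;
  (case: (pickP [pred y | (y \in C) && (y < c)]) => [y /andP[yC ylt]|H];
  [ have Hp : [set w in C | w < y] \proper [set w in C | w < c];
    [ apply/properP; split;
      [ apply/subsetP => w; rewrite !inE => /andP[-> wy] /=; exact: lt_trans wy ylt
      | by exists y; rewrite !inE ?yC ?ylt ?ltxx ]
    | have Hc := proper_card Hp ]
  | exists c; split => //; split => // y yC ylt;
    by have := H y; rewrite /= yC ylt ]).
- by have := leq_trans Hc Hn.
- have [m [mm my]] := IH y yC (ltnSE (leq_trans Hc Hn)).
  by exists m; split => //; exact: le_trans my (ltW ylt).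
Qed.

Lemma ex_max (d : Order.disp_t) (L : finLatticeType d) (C : {set L}) c :
  c \in C -> exists m, maximal_elt C m /\ c <= m.
Proof.
move=> cC.
suff H : forall n c, c \in C -> (#|[set y in C | (c < y)%O]| <= n)%N ->
  exists m, maximal_elt C m /\ c <= m by exact: H _ c cC (leqnn _).
move=> n; elim: n => [|n IH] {cC}c cC Hn;
  (case: (pickP [pred y | (y \in C) && (c < y)]) => [y /andP[yC ylt]|H];
  [ have Hp : [set w in C | y < w] \proper [set w in C | c < w];
    [ apply/properP; split;
      [ apply/subsetP => w; rewrite !inE => /andP[-> wy] /=; exact: lt_trans ylt wy
      | by exists y; rewrite !inE ?yC ?ylt ?ltxx ]
    | have Hc := proper_card Hp ]
  | exists c; split => //; split => // y yC ylt;
    by have := H y; rewrite /= yC ylt ]).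
- by have := leq_trans Hc Hn.
- have [m [mm my]] := IH y yC (ltnSE (leq_trans Hc Hn)).
  by exists m; split => //; exact: le_trans (ltW ylt) my.
Qed.

Lemma join_seq (d : Order.disp_t) (L : finLatticeType d) (m : L) (s : seq L) :
  exists z, m <= z /\ (forall y, y \in s -> y <= z) /\
    (forall u, m <= u -> (forall y, y \in s -> y <= u) -> z <= u).
Proof.
elim: s => [|a s [z [mz [Hs Hu]]]].
  by exists m; split => //; split => // u mu _.
exists (a `|` z); split; first by rewrite (le_trans mz) // leUr.
split.
  move=> y; rewrite inE => /predU1P[->|ys]; first by rewrite leUl.
  by rewrite (le_trans (Hs y ys)) // leUr.
move=> u mu H; rewrite leUx H ?mem_head //=.
by apply: Hu => // y ys; apply: H; rewrite inE ys orbT.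
Qed.

Theorem lemma3p17 (d : Order.disp_t) (L : finLatticeType d) (C : {set L}) :
  C != set0 -> convex C ->
  forall M : {set L}, maximal_chain M -> M :&: C = set0 ->
  exists2 x : L, x \in M &
    (exists m : L, maximal_elt C m /\ ~~ (x <= m)) /\
    (exists m : L, minimal_elt C m /\ ~~ (m <= x)).
Proof.
move=> Cn0 Cconv M [Mch Mmax] MC.
apply: NNPP => Hno.
have [c cC] : exists c, c \in C by apply/set0Pn.
have [m [[mC mmin] mc]] := ex_min cC.
have [m' [[m'C m'max] cm']] := ex_max cC.
have mm' : m <= m' := le_trans mc cm'.
have key : forall x, x \in M -> ~~ (x <= m') -> m <= x.
  move=> x xM xn; apply: contraT => nmx; case: Hno; exists x => //.
  by split; [exists m'; split | exists m; split].
have [z [mz [Az zmin]]] := join_seq m (enum [set x in M | x <= m']).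
have zm' : z <= m'.
  by apply: zmin => // y; rewrite mem_enum inE => /andP[_ ->].
have zC : z \in C := Cconv m m' z mC m'C mz zm'.
have zM : z \notin M.
  apply/negP => zM; have : z \in M :&: C by rewrite inE zM zC.
  by rewrite MC inE.
have cz : forall x, x \in M -> (z <= x) || (x <= z).
  move=> x xM; case: (boolP (x <= m')) => xm.
    by apply/orP; right; apply: Az; rewrite mem_enum inE xM xm.
  apply/orP; left; apply: zmin; first exact: key.
  move=> y; rewrite mem_enum inE => /andP[yM ym].
  have := Mch y x yM xM; case/orP => // xy.
  by rewrite (le_trans xy ym) in xm.
apply: (Mmax z zM) => x y; rewrite !inE.
case/predU1P => [->|xM]; case/predU1P => [->|yM].
- by rewrite lexx.
- exact: cz.
- by rewrite orbC; exact: cz.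
- exact: Mch.
Qed.
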